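(* Let $G$ be a graph and $u,v$ vertices with $d(u,v) \geq 3$, and let the sets $A_k, B_k$ ($k \ge 1$) be defined as in the context. Then for every $k \geq 1$, every vertex $x \in A_k$ with $N(x) \cap N^k(u,v) = \emptyset$ is a witness of the non-edge $uv$, i.e. $|d(x,u) - d(x,v)| \geq 2$.
   Context: $d$ is the graph distance in $G$ and $N(X)$ is the set of neighbours of vertices in $X$ ($N(x)=N(\{x\})$). For $k\ge 1$, $N^k(u,v) = \{x \in V(G) : \min(d(u,x),d(v,x)) = k\}$. Define $A_1 = N^1(u,v)$, $B_1 = \emptyset$, and for $k \geq 2$: $\mathcal{B}^k_1 = N(B_{k-1})$; $\mathcal{B}^k_2 = N(\{x \in A_{k-1} : N(x) \cap N^{k-1}(u,v) \neq \emptyset\})$; $\mathcal{B}^k_3 = \{x \in N^k(u,v) : |N(x) \cap A_{k-1}| \geq 2\}$; $B_k = N^k(u,v) \cap (\mathcal{B}^k_1 \cup \mathcal{B}^k_2 \cup \mathcal{B}^k_3)$ and $A_k = N^k(u,v) \setminus B_k$. A vertex $s$ is a witness of the non-edge $uv$ if $|d(s,u)-d(s,v)| \ge 2$. *)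

(* Defs.v *)
(* Finite simple graph: symmetric irreflexive relation e on a finType T. *)
From mathcomp Require Import all_boot.
Set Implicit Arguments. Unset Strict Implicit. Unset Printing Implicit Defensive.

Section Graph.
Variables (T : finType) (e : rel T).

Definition nbhd (X : {set T}) : {set T} := [set y | [exists x in X, e x y]].

Fixpoint ball (k : nat) (x : T) : {set T} :=
  match k with
  | 0 => [set x]
  | k'.+1 => ball k' x :|: nbhd (ball k' x)
  end.

(* graph distance with values in nat + infinity (None = infinity, i.e. not connected) *)
Definition dist (x y : T) : option nat :=
  let k := find (fun k => y \in ball k x) (iota 0 #|T|) in
  if k < #|T| then Some k else None.

Definition emin (a b : option nat) : option nat :=
  match a, b with
  | Some m, Some n => Some (minn m n)
  | Some m, None => Some m
  | None, Some n => Some n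
  | None, None => None
  end.

Definition Nk (u v : T) (k : nat) : {set T} :=
  [set x | emin (dist u x) (dist v x) == Some k].

(* ABs u v k = (A_{k+1}, B_{k+1}) *)
Fixpoint ABs (u v : T) (k : nat) : {set T} * {set T} :=
  match k with
  | 0 => (Nk u v 1, set0)
  | k'.+1 =>
      let A := (ABs u v k').1 in
      let B := (ABs u v k').2 in
      let B1 := nbhd B in
      let B2 := nbhd [set x in A | nbhd [set x] :&: Nk u v k'.+1 != set0] in
      let B3 := [set x in Nk u v k'.+2 | 1 < #|nbhd [set x] :&: A|] in
      let Bn := Nk u v k'.+2 :&: (B1 :|: B2 :|: B3) in
      (Nk u v k'.+2 :\: Bn, Bn)
  end.

Definition Aset (u v : T) (k : nat) : {set T} := (ABs u v k.-1).1.
Definition Bset (u v : T) (k : nat) : {set T} := (ABs u v k.-1).2.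

(* s is a witness of the non-edge uv: |d(s,u) - d(s,v)| >= 2,
   where a finite value minus infinity counts as >= 2 *)
Definition witness (u v s : T) : bool :=
  match dist s u, dist s v with
  | Some a, Some b => (1 < a - b) || (1 < b - a)
  | Some _, None | None, Some _ => true
  | None, None => false
  end.

Definition dist_ge (x y : T) (n : nat) : bool :=
  match dist x y with Some d => n <= d | None => true end.

End Graph.

(* Main.v *)
Require Import Defs.
From mathcomp Require Import all_boot.
Set Implicit Arguments. Unset Strict Implicit.

Lemma ballS (T : finType) (e : rel T) k x :
  ball e k.+1 x = ball e k x :|: nbhd e (ball e k x).
Proof. by []. Qed.

Lemma ball_mono (T : finType) (e : rel T) i j x :
  i <= j -> ball e i x \subset ball e j x.
Proof.
elim: j => [|j IH]; first by rewrite leqn0 => /eqP->.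
rewrite leq_eqVlt => /orP[/eqP->//|Hij].
apply: subset_trans (IH Hij) _; rewrite ballS; exact: subsetUl.
Qed.

Lemma ball_adj (T : finType) (e : rel T) k x a b :
  e a b -> a \in ball e k x -> b \in ball e k.+1 x.
Proof.
move=> Hab Ha; rewrite ballS inE; apply/orP; right; rewrite inE.
by apply/existsP; exists a; rewrite Ha Hab.
Qed.

Lemma ballSP (T : finType) (e : rel T) k x y :
  y \in ball e k.+1 x -> y \in ball e k x \/ exists2 z, z \in ball e k x & e z y.
Proof.
rewrite ballS inE => /orP[H|H]; [by left|right].
by move: H; rewrite inE => /existsP[z /andP[Hz Hzy]]; exists z.
Qed.

Lemma ball_front (T : finType) (e : rel T) k y z w :
  e y z -> w \in ball e k z -> w \in ball e k.+1 y.
Proof.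
move=> Hyz; elim: k w => [|k IH] w.
  rewrite inE => /eqP->; apply: (@ball_adj _ _ 0) Hyz _; exact: set11.
case/ballSP=> [H|[w' Hw' Hw'w]].
  by apply: (subsetP (ball_mono _ _ (leqnSn _))); exact: IH.
exact: ball_adj Hw'w (IH _ Hw').
Qed.

Lemma ball_sym (T : finType) (e : rel T) : symmetric e -> forall k x y,
  (y \in ball e k x) = (x \in ball e k y).
Proof.
move=> es.
have H : forall k x y, y \in ball e k x -> x \in ball e k y.
  elim=> [|k IH] x y.
    by rewrite !inE => /eqP->.
  case/ballSP=> [H|[z Hz Hzy]].
    by apply: (subsetP (ball_mono _ _ (leqnSn _))); exact: IH.
  apply: (@ball_front _ _ _ y z); first by rewrite es.
  exact: IH.
by move=> k x y; apply/idP/idP; apply: H.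
Qed.

Lemma dist_sym (T : finType) (e : rel T) : symmetric e -> forall x y,
  dist e x y = dist e y x.
Proof.
move=> es x y; rewrite /dist.
by rewrite (@eq_find _ _ (fun k => x \in ball e k y)) // => k; rewrite ball_sym.
Qed.

Lemma dist_someP (T : finType) (e : rel T) x y d :
  dist e x y = Some d <->
  [/\ y \in ball e d x, d < #|T| & forall i, i < d -> y \notin ball e i x].
Proof.
rewrite /dist; set P := (fun k => y \in ball e k x); set s := iota 0 #|T|.
have Hs : size s = #|T| by rewrite size_iota.
split.
  case: ifP => // H [<-]; split => //.
  - have Hh : has P s by rewrite has_find Hs.
    by move: (nth_find 0 Hh); rewrite nth_iota.
  - move=> i Hi; have Hi' : i < size s by rewrite Hs (ltn_trans Hi H).
    by move: (before_find 0 Hi); rewrite nth_iota -?Hs // add0n /P => ->.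
case=> H1 H2 H3.
have Hf : find P s = d.
  case: (ltngtP (find P s) d) => // Hc.
  - have Hh : has P s by rewrite has_find Hs (ltn_trans Hc H2).
    move: (nth_find 0 Hh); rewrite nth_iota ?add0n; last by rewrite (ltn_trans Hc H2).
    by move=> HP; move: (H3 _ Hc); rewrite -/(P (find P s)) HP.
  - by move: (before_find 0 Hc); rewrite nth_iota // add0n /P H1.
by rewrite Hf H2.
Qed.
Lemma ball_fix (T : finType) (e : rel T) x j k :
  ball e j x = ball e j.+1 x -> j <= k -> ball e k x = ball e j x.
Proof.
move=> Hj; elim: k => [|k IH]; first by rewrite leqn0 => /eqP->.
rewrite leq_eqVlt => /orP[/eqP<-//|Hk].
by rewrite ballS IH // -ballS.
Qed.

Lemma ball_card (T : finType) (e : rel T) x n :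
  (forall j, j < n -> ball e j x != ball e j.+1 x) -> n < #|ball e n x|.
Proof.
elim: n => [|n IH] H; first by rewrite /= cards1.
apply: leq_ltn_trans (IH (fun j Hj => H j (ltnW Hj))) _.
apply: proper_card; rewrite properEneq H //.
by rewrite ballS subsetUl.
Qed.

Lemma ball_stab (T : finType) (e : rel T) x m :
  ball e m x \subset ball e #|T|.-1 x.
Proof.
case: (boolP [exists j : 'I_#|T|, ball e j x == ball e j.+1 x]).
  case/existsP=> [[j Hj] /eqP /= Hfix].
  apply: subset_trans (ball_mono _ _ (leq_maxl m j)) _.
  rewrite (ball_fix Hfix (leq_maxr m j)).
  by apply: ball_mono; rewrite -ltnS prednK // (leq_ltn_trans _ Hj).
move/existsPn=> H.
have := @ball_card _ e x #|T| (fun j Hj => H (Ordinal Hj)).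
by rewrite ltnNge max_card.
Qed.

Lemma reach (T : finType) (e : rel T) x y m :
  y \in ball e m x -> exists2 d, dist e x y = Some d & d <= m.
Proof.
move=> Hm.
have Hn : 0 < #|T| by apply/card_gt0P; exists x.
have Hy : y \in ball e #|T|.-1 x by exact: (subsetP (ball_stab e x m)).
have Hd : exists d, dist e x y = Some d.
  rewrite /dist; set P := (fun k => y \in ball e k x).
  have Hh : has P (iota 0 #|T|).
    apply/hasP; exists #|T|.-1 => //.
    by rewrite mem_iota add0n leq0n /= prednK.
  by move: Hh; rewrite has_find size_iota => ->; eexists.
case: Hd => d Hd; exists d => //.
case/dist_someP: Hd => _ _ H3; rewrite leqNgt; apply/negP => Hlt.
by move: (H3 _ Hlt); rewrite Hm.
Qed.
From mathcomp Require Import zify.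

Lemma adj_some (T : finType) (e : rel T) u a b j :
  e a b -> dist e u a = Some j -> exists2 d, dist e u b = Some d & d <= j.+1.
Proof.
move=> Hab /dist_someP[H1 _ _]; apply: reach; exact: ball_adj Hab H1.
Qed.

Lemma adj_le (T : finType) (e : rel T) : symmetric e -> forall u a b j d,
  e a b -> dist e u a = Some j -> dist e u b = Some d -> j <= d.+1.
Proof.
move=> es u a b j d Hab Ha Hb.
have Hba : e b a by rewrite es.
by case: (adj_some Hba Hb) => d' ; rewrite Ha => -[<-].
Qed.

Lemma dist_pred (T : finType) (e : rel T) u x k :
  dist e u x = Some k.+1 -> exists2 y, e y x & dist e u y = Some k.
Proof.
case/dist_someP=> H1 H2 H3.
case: (ballSP H1) => [H|[z Hz Hzx]]; first by move: (H3 k (ltnSn k)); rewrite H.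
exists z => //.
case: (reach Hz) => j Hj Hjk.
case: (ltngtP j k) => [Hlt||<-//]; last by rewrite ltnNge Hjk.
case/dist_someP: Hj => Hj _ _.
have : x \in ball e k u.
  apply: (subsetP (ball_mono _ _ Hlt)); exact: ball_adj Hzx Hj.
by move: (H3 k (ltnSn k)) => /negP.
Qed.

Lemma nb1 (T : finType) (e : rel T) x y : (y \in nbhd e [set x]) = e x y.
Proof.
rewrite inE; apply/existsP/idP => [[x' /andP[/set1P-> //]]| H].
by exists x; rewrite set11 H.
Qed.

Lemma notin0 (T : finType) (A : {set T}) z : A == set0 -> z \in A -> False.
Proof. by move/eqP->; rewrite inE. Qed.

Lemma NkE (T : finType) (e : rel T) u v w j :
  (w \in Nk e u v j) = (emin (dist e u w) (dist e v w) == Some j).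
Proof. by rewrite inE. Qed.

Lemma NkC (T : finType) (e : rel T) u v j : Nk e v u j = Nk e u v j.
Proof.
apply/setP => w; rewrite !NkE.
by case: (dist e u w) => [a|]; case: (dist e v w) => [c|] //=; rewrite minnC.
Qed.

Lemma ABsC (T : finType) (e : rel T) u v j : ABs e v u j = ABs e u v j.
Proof.
elim: j => [|j IH]; first by cbn [ABs]; rewrite NkC.
cbn [ABs]. rewrite !(NkC e u v) IH. done.
Qed.

Lemma AsubN (T : finType) (e : rel T) u v k w :
  w \in Nk e u v k.+1 -> w \notin Bset e u v k.+1 -> w \in Aset e u v k.+1.
Proof.
case: k => [|k] Hw Hb; first by [].
move: Hb; rewrite /Aset /Bset. cbn [ABs predn]. move=> H; rewrite [X in w \in X]/= inE Hw andbT; exact: H.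
Qed.
Lemma Aprops (T : finType) (e : rel T) u v k x :
  x \in Aset e u v k.+2 ->
  [/\ x \in Nk e u v k.+2, x \notin nbhd e (Bset e u v k.+1),
      x \notin nbhd e [set w in Aset e u v k.+1 | nbhd e [set w] :&: Nk e u v k.+1 != set0]
    & ~~ (1 < #|nbhd e [set x] :&: Aset e u v k.+1|)].
Proof.
rewrite /Aset /Bset; cbn [ABs predn] => H.
have {H} /setDP[HN HB] : x \in (Nk e u v k.+2 :\: (Nk e u v k.+2 :&: (nbhd e (ABs e u v k).2
      :|: nbhd e [set x in (ABs e u v k).1 | nbhd e [set x] :&: Nk e u v k.+1 != set0]
      :|: [set x in Nk e u v k.+2 | 1 < #|nbhd e [set x] :&: (ABs e u v k).1|]))) by exact: H.
move: HB; rewrite in_setI HN /= !in_setU !negb_or => /andP[/andP[H1 H2] H3].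
split => //; move: H3; by rewrite inE HN.
Qed.
Lemma nowit (T : finType) (e : rel T) (es : symmetric e) u v z a c :
  dist e u z = Some a -> dist e v z = Some c -> a <= c.+1 -> c <= a.+1 ->
  witness e u v z -> False.
Proof.
move=> Ha Hc H1 H2; rewrite /witness !(dist_sym es z) Ha Hc => /orP[] H; lia.
Qed.

Lemma core (T : finType) (e : rel T) (es : symmetric e) u v
  (H3 : forall z, z \in ball e 1 u -> z \in ball e 1 v -> False) k
  (IH : 0 < k -> forall z, z \in Aset e u v k ->
          nbhd e [set z] :&: Nk e u v k == set0 -> witness e u v z)
  x (hx : x \in Aset e u v k.+1) (hxN : nbhd e [set x] :&: Nk e u v k.+1 == set0)
  (hu : dist e u x = Some k.+1) b (hb : dist e v x = Some b)
  (hb1 : k.+1 <= b) (hb2 : b <= k.+2) : False.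
Proof.
have hxN' : forall z, e z x -> z \in Nk e u v k.+1 -> False.
  by move=> z Hz HzN; apply: (@notin0 _ _ z hxN); rewrite in_setI nb1 (es x z) Hz HzN.
case: k IH hx hxN hxN' hu hb hb1 hb2 => [|K] IH hx hxN hxN' hu hb hb1 hb2.
  have [Eb|Eb] : b = 1 \/ b = 2 by lia.
    subst b; apply: (H3 x); [by case/dist_someP: hu|by case/dist_someP: hb].
  subst b; case: (dist_pred hb) => z Hzx Hz.
  have Hxz : e x z by rewrite es.
  case: (adj_some Hxz hu) => j Hj _.
  case: j Hj => [|j] Hj.
    apply: (H3 z); last by case/dist_someP: Hz.
    case/dist_someP: Hj => H _ _; exact: (subsetP (ball_mono _ _ (leq0n 1))).
  by apply: (hxN' z Hzx); rewrite NkE Hj Hz /=; apply/eqP; congr Some; lia.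
case: (Aprops hx) => hxNk hnB hnA hn3.
have S : forall w, e w x -> w \in Nk e u v K.+1 ->
    w \in Aset e u v K.+1 /\ witness e u v w.
  move=> w Hw HwN.
  have HwA : w \in Aset e u v K.+1.
    apply: AsubN HwN _; apply/negP => HwB; move/negP: hnB; apply.
    by rewrite inE; apply/existsP; exists w; rewrite HwB Hw.
  split => //; apply: IH => //.
  case: (boolP (nbhd e [set w] :&: Nk e u v K.+1 == set0)) => // Hne.
  exfalso; move/negP: hnA; apply; rewrite inE; apply/existsP; exists w.
  by rewrite inE HwA Hne Hw.
have Uq : forall y z, e y x -> e z x -> y \in Aset e u v K.+1 ->
    z \in Aset e u v K.+1 -> y = z.
  move=> y z Hy Hz HyA HzA; case: (eqVneq y z) => // Hne; exfalso.
  move/negP: hn3; apply.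
  have Hsub : [set y; z] \subset nbhd e [set x] :&: Aset e u v K.+1.
    by apply/subsetP => w /set2P[] ->;
      rewrite in_setI nb1 ?(es x y) ?(es x z) ?Hy ?Hz ?HyA ?HzA.
  by apply: leq_trans (subset_leq_card Hsub); rewrite cards2 Hne.
case: (dist_pred hu) => y Hyx Hy.
have Hxy : e x y by rewrite es.
have [Eb|Eb] : b = K.+2 \/ b = K.+3 by lia.
  subst b; case: (dist_pred hb) => z Hzx Hz.
  have Hxz : e x z by rewrite es.
  case: (adj_some Hxy hb) => jy Hjy _; have := adj_le es Hxy hb Hjy => Ljy.
  case: (adj_some Hxz hu) => jz Hjz _; have := adj_le es Hxz hu Hjz => Ljz.
  have HyN : y \in Nk e u v K.+1.
    by rewrite NkE Hy Hjy /=; apply/eqP; congr Some; lia.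
  have HzN : z \in Nk e u v K.+1.
    by rewrite NkE Hjz Hz /=; apply/eqP; congr Some; lia.
  case: (S y Hyx HyN) => HyA _; case: (S z Hzx HzN) => HzA Wz.
  have Eyz := Uq y z Hyx Hzx HyA HzA; subst z.
  by apply: (nowit es Hy Hz) Wz.
subst b; case: (dist_pred hb) => z Hzx Hz.
have Hxz : e x z by rewrite es.
case: (adj_some Hxz hu) => jz Hjz _; have := adj_le es Hxz hu Hjz => Ljz.
have [Ej|Lj] : jz = K.+1 \/ K.+2 <= jz by lia.
  subst jz.
  have HzN : z \in Nk e u v K.+1.
    by rewrite NkE Hjz Hz /=; apply/eqP; congr Some; lia.
  case: (S z Hzx HzN) => _ Wz.
  by apply: (nowit es Hjz Hz _ _ Wz); lia.
by apply: (hxN' z Hzx); rewrite NkE Hjz Hz /=; apply/eqP; congr Some; lia.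
Qed.
Lemma H3_of (T : finType) (e : rel T) (es : symmetric e) u v :
  dist_ge e u v 3 -> forall z, z \in ball e 1 u -> z \in ball e 1 v -> False.
Proof.
move=> huv z Hu Hv; rewrite (ball_sym es) in Hv.
have Hv2 : v \in ball e 2 u.
  case: (ballSP Hv) => [|[w Hw Hwv]].
    rewrite inE => /eqP ->; exact: (subsetP (ball_mono _ _ (leqnSn 1))).
  move: Hw; rewrite inE => /eqP Ew; subst w; exact: ball_adj Hwv Hu.
case: (reach Hv2) => d Hd Hd2; rewrite /dist_ge Hd in huv; lia.
Qed.

Lemma AinN (T : finType) (e : rel T) u v k x :
  x \in Aset e u v k.+1 -> x \in Nk e u v k.+1.
Proof. by case: k => [|k] //; case/Aprops. Qed.

Lemma fin (T : finType) (e : rel T) (es : symmetric e) u v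
  (H3 : forall z, z \in ball e 1 u -> z \in ball e 1 v -> False) k
  (IHuv : 0 < k -> forall z, z \in Aset e u v k ->
          nbhd e [set z] :&: Nk e u v k == set0 -> witness e u v z)
  (IHvu : 0 < k -> forall z, z \in Aset e v u k ->
          nbhd e [set z] :&: Nk e v u k == set0 -> witness e v u z)
  x (hx : x \in Aset e u v k.+1) (hxN : nbhd e [set x] :&: Nk e u v k.+1 == set0) :
  witness e u v x.
Proof.
have := AinN hx; rewrite NkE /witness !(dist_sym es x).
case Du: (dist e u x) => [a|]; case Dv: (dist e v x) => [c|] //= /eqP [Hm].
have [Hac|Hca] := leqP a c.
  have Ea : a = k.+1 by lia.
  subst a; case: (leqP c k.+2) => Hc; last by apply/orP; right; lia.
  exfalso; apply: (core es H3 IHuv hx hxN Du Dv) => //; lia.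
have Ec : c = k.+1 by lia.
subst c; case: (leqP a k.+2) => Ha; last by apply/orP; left; lia.
exfalso.
have H3' : forall z, z \in ball e 1 v -> z \in ball e 1 u -> False.
  by move=> z h1 h2; exact: (H3 z h2 h1).
have hx' : x \in Aset e v u k.+1 by rewrite /Aset ABsC.
have hxN' : nbhd e [set x] :&: Nk e v u k.+1 == set0 by rewrite NkC.
apply: (core es H3' IHvu hx' hxN' Dv Du) => //; lia.
Qed.

Lemma Q (T : finType) (e : rel T) (es : symmetric e) k : forall u v,
  (forall z, z \in ball e 1 u -> z \in ball e 1 v -> False) ->
  forall x, x \in Aset e u v k.+1 -> nbhd e [set x] :&: Nk e u v k.+1 == set0 ->
  witness e u v x.
Proof.
elim: k => [|k IH] u v H3 x hx hxN.
  by apply: (fin es H3 _ _ hx hxN).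
apply: (fin es H3 _ _ hx hxN) => _; first exact: IH.
apply: IH => z h1 h2; exact: (H3 z h2 h1).
Qed.

Unset Implicit Arguments.
Set Strict Implicit.

Theorem mainTheorem7 (T : finType) (e : rel T)
  (e_sym : symmetric e) (e_irr : irreflexive e)
  (u v : T) (huv : dist_ge e u v 3)
  (k : nat) (hk : 1 <= k) (x : T)
  (hxA : x \in Aset e u v k)
  (hxN : nbhd e [set x] :&: Nk e u v k == set0) :
  witness e u v x.
Proof.
case: k hk hxA hxN => [//|k] _ hxA hxN.
exact: (Q e_sym (H3_of e_sym huv) hxA hxN).
Qed.
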